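(* Let $(E,+,0)$ be an abelian group with a translation-invariant preorder $\le$ whose positive cone $E_+=\{x\in E:x\ge0\}$ is pointed ($E_+\cap(-E_+)=\{0\}$), and let $u\in E_+$. Let $\mathcal{A}$ be a finite set of group endomorphisms $T:E\to E$, closed under composition, each of which is monotone ($x\le y\Rightarrow T(x)\le T(y)$) and subunital ($T(u)\le u$). Define $d(T)=u-T(u)\ge0$ and assume the cocycle identity \[ d(T\circ S)=d(T)+T(d(S))\quad\text{for all }T,S\in\mathcal{A}. \] Then for every $T\in\mathcal{A}$ there exists $n$ with $1\le n\le|\mathcal{A}|$ such that $T^n(d(T))=0$.
   Context: Translation-invariant means $x\le y$ implies $x+z\le y+z$ for all $z$. *)

(* Defs.v *)
From HB Require Import structures.
From mathcomp Require Import all_boot all_order all_algebra.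
From Stdlib Require Import List.
Set Implicit Arguments. Unset Strict Implicit. Unset Printing Implicit Defensive.
Import GRing.Theory.
Local Open Scope ring_scope.

Definition defect (E : zmodType) (u : E) (T : E -> E) : E := u - T u.

(* Main.v *)
Require Import Defs.
From HB Require Import structures.
From mathcomp Require Import all_boot all_order all_algebra.
From Stdlib Require Import List.
From mathcomp Require Import zify.
From Stdlib Require Import Lia Classical FunctionalExtensionality.
Import GRing.Theory.
Local Open Scope ring_scope.

Theorem theorem9p1
  (E : zmodType) (le : E -> E -> Prop)
  (le_refl : forall x, le x x)
  (le_trans : forall x y z, le x y -> le y z -> le x z)
  (le_transl : forall x y z, le x y -> le (x + z) (y + z))
  (pointed : forall x, le 0 x -> le 0 (- x) -> x = 0)
  (u : E) (u_ge0 : le 0 u)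
  (A : list (E -> E)) (A_nodup : NoDup A)
  (A_add : forall T, In T A -> forall x y, T (x + y) = T x + T y)
  (A_comp : forall T S, In T A -> In S A -> In (T \o S) A)
  (A_mono : forall T, In T A -> forall x y, le x y -> le (T x) (T y))
  (A_sub : forall T, In T A -> le (T u) u)
  (A_cocycle : forall T S, In T A -> In S A ->
     defect u (T \o S) = defect u T + T (defect u S)) :
  forall T, In T A ->
    exists n : nat, (1 <= n <= length A)%N /\ iter n T (defect u T) = 0.
Proof.
move=> T TA.
set d := defect u T.
have T0 : forall S, In S A -> S 0 = 0.
  move=> S SA; have h := A_add S SA 0 0; rewrite addr0 in h.
  by apply: (@addrI _ (S 0)); rewrite addr0 -h.
have pos_add : forall a b, le 0 a -> le 0 b -> le 0 (a + b).
  move=> a b ha hb; apply: le_trans hb _.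
  by have := le_transl _ _ b ha; rewrite add0r.
have d_ge0 : forall S, In S A -> le 0 (defect u S).
  move=> S SA; have := le_transl _ _ (- S u) (A_sub S SA).
  by rewrite subrr.
have Pm_in : forall m, (0 < m)%N -> In (iter m T) A.
  elim=> [//|[|m] IH _]; first exact: TA.
  exact: (A_comp _ _ TA (IH isT)).
have Pm_ge0 : forall m, le 0 (iter m T d).
  case=> [|m]; first exact: (d_ge0 T TA).
  have h := A_mono _ (Pm_in m.+1 isT) _ _ (d_ge0 T TA).
  by rewrite (T0 _ (Pm_in m.+1 isT)) in h.
have step : forall m, (0 < m)%N ->
    defect u (iter m.+1 T) = defect u (iter m T) + iter m T d.
  move=> m hm.
  have -> : iter m.+1 T = iter m T \o T.
    by apply: functional_extensionality => x; rewrite iterSr.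
  exact: A_cocycle _ _ (Pm_in m hm) TA.
have main : forall i k, (0 < i)%N -> exists R, le 0 R /\
    defect u (iter (i + k).+1 T) = defect u (iter i T) + iter i T d + R.
  move=> i k hi; elim: k => [|k [R [HR HE]]].
    by exists 0; split; [exact: le_refl | rewrite addn0 addr0 step].
  exists (R + iter (i + k).+1 T d); split; first exact: pos_add.
  by rewrite addnS step // HE !addrA.
have key : forall i j, (0 < i)%N -> (i < j)%N -> iter i T = iter j T ->
    iter i T d = 0.
  move=> i j hi hij hP.
  have [R [HR HE]] := main i (j - i - 1)%N hi.
  have ej : (i + (j - i - 1)).+1 = j by lia.
  rewrite ej -hP in HE.
  have hs : iter i T d + R = 0.
    apply: (@addrI _ (defect u (iter i T))).
    by rewrite addrA addr0 -HE.
  apply: pointed; first exact: Pm_ge0.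
  by move/eqP: hs; rewrite addr_eq0 => /eqP ->; rewrite opprK.
apply: NNPP => H.
set N := length A.
set P := fun k : nat => iter k T.
have nd : forall n a, (0 < a)%N -> (a + n <= N.+2)%N ->
    NoDup (map P (List.seq a n)).
  elim=> [|n IH] a ha han; first exact: NoDup_nil.
  simpl; apply: NoDup_cons; last by apply: IH; lia.
  move/in_map_iff => [k [hk /in_seq hin]].
  apply: H; exists a; split; first by lia.
  apply: (key a k); [done | lia | exact: esym hk].
have := NoDup_incl_length (nd N.+1 1%N isT (leqnn _)).
rewrite length_map length_seq => h.
have : (N.+1 <= N)%coq_nat.
  apply: h => f /in_map_iff [k [<- /in_seq hk]].
  apply: Pm_in; lia.
lia.
Qed.
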